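(* Let $r_A^{(1)}, r_B^{(1)}, r_A^{(2)}, r_B^{(2)} > 0$ be the initial reserves of two zero-fee constant-product pools $P_1, P_2$ trading assets $A$ and $B$, and let $a>0$. Then there exist $x \in (0, r_A^{(2)})$ and $y>0$ such that the following four-step atomic sequence is well defined and realizes the migration of exactly $a$ units of $A$. \begin{enumerate} \item Step 1: $x+a$ units of $A$ are input to $P_1$, which outputs $b=\dfrac{r_B^{(1)}(x+a)}{r_A^{(1)}+x+a}$ units of $B$. Of this input, $a$ units come from the principal and $x$ units come from flash liquidity. \item Step 2: the $b$ units of $B$ are input to $P_2$, which outputs exactly $x$ units of $A$; these repay the flash liquidity. This step requires \[ b=\frac{r_B^{(2)}x}{r_A^{(2)}-x}, \] equivalently the consistency condition \[ r_B^{(1)}(x+a)(r_A^{(2)}-x)=r_B^{(2)}x\,(r_A^{(1)}+x+a). \] \item Step 3: $y$ units of $A$ are input to $P_2$, now in state $(r_A^{(2)}-x,\ r_B^{(2)}+b)$, which outputs \[ b'=\frac{r_A^{(2)}r_B^{(2)}y}{(r_A^{(2)}-x)(r_A^{(2)}-x+y)} \] units of $B$. \item Step 4: the $b'$ units of $B$ are input to $P_1$, now in state $(r_A^{(1)}+x+a,\ r_B^{(1)}-b)$, which outputs \[ y+a'=\frac{(r_A^{(1)}+x+a)\,b'}{r_B^{(1)}-b+b'} \] units of $A$. Of this output, $y$ units repay Step 3 and $a'$ units go to the beneficiary. \end{enumerate} For these $x$ and $y$, one has $a'=a$. Consequently, over the whole sequence, the principal's balance of $A$ changes by $-a$ and the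 beneficiary's balance of $A$ changes by $+a$.
   Context: Model conventions: \begin{itemize} \item A zero-fee constant-product pool $i$ with reserves $(r_A^{(i)}, r_B^{(i)})$ keeps the product $r_A^{(i)} r_B^{(i)}=k_i$ invariant under every swap. Inputting $\delta$ of one asset therefore outputs the amount of the other asset that keeps this product unchanged. \item Each step updates the reserves of the pool it acts on, and later steps use the updated reserves. \item The principal supplies the $a$ units of $A$. \item The beneficiary receives the $a'$ units of $A$. \item Flash liquidity of $x$ units of $A$ must be repaid within the same atomic execution. \end{itemize} *)

(* Defs.v *)
From HB Require Import structures.
From mathcomp Require Import all_boot all_order all_algebra.
From mathcomp Require Import reals.
Set Implicit Arguments. Unset Strict Implicit. Unset Printing Implicit Defensive.
Import Order.TTheory GRing.Theory Num.Theory.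
Local Open Scope ring_scope.

(* Zero-fee constant-product swap on a pool with reserve [rin] of the input
   asset and reserve [rout] of the output asset: inputting [d] of the input
   asset outputs the amount that keeps the product invariant, i.e. the [o]
   with (rin + d) * (rout - o) = rin * rout. *)
Definition swap_out {R : realType} (rin rout d : R) : R :=
  rout - rin * rout / (rin + d).

(* Main.v *)
Require Import Defs.
From HB Require Import structures.
From mathcomp Require Import all_boot all_order all_algebra.
From mathcomp Require Import reals.
From mathcomp Require Import ring lra.
Import Order.TTheory GRing.Theory Num.Theory.
Local Open Scope ring_scope.

Ltac fld := field; repeat (apply/andP; split); try done.

Lemma root_ex (R : realType) (rA1 rB1 rA2 rB2 a : R) :
  0 < rA1 -> 0 < rB1 -> 0 < rA2 -> 0 < rB2 -> 0 < a ->
  exists x : R, [/\ 0 < x, x < rA2 &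
    rB1*(x+a)*(rA2-x) - rB2*x*(rA1+x+a) = 0].
Proof.
move=> h1 h2 h3 h4 h5.
set A := rB1 + rB2.
set B := rB1*rA2 - rB1*a - rB2*(rA1+a).
set C := rB1*a*rA2.
have hA : 0 < A by rewrite /A; lra.
have hC : 0 < C by rewrite /C; apply: mulr_gt0 => //; apply: mulr_gt0.
have hAC : 0 < A * C by apply: mulr_gt0.
set D := B^+2 + 4*A*C.
have hD : 0 <= D by rewrite /D; nra.
set s := Num.sqrt D.
have hs : s^+2 = D by exact: sqr_sqrtr.
have hs0 : 0 <= s by exact: sqrtr_ge0.
have hA0 : A != 0 by rewrite gt_eqF.
exists ((B + s) / (2*A)).
have e : 2*A*((B + s) / (2*A)) = B + s.
  by fld.
set x := (B + s) / (2*A) in e *.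
have hBs : 0 < B + s by rewrite /D in hs; nra.
split.
- have : 0 < 2*A*x by rewrite e.
  rewrite -mulrA pmulr_rgt0 ?ltr0n //; rewrite pmulr_rgt0 //.
- set T := 2*A*rA2 - B.
  have hT : 0 < T by rewrite /T /B /A; nra.
  have hf : 0 < A*rA2^+2 - rA2*B - C.
    have -> : A*rA2^+2 - rA2*B - C = rB2*rA2*(rA1+rA2+a) by rewrite /A /B /C; ring.
    by apply: mulr_gt0; [apply: mulr_gt0|lra].
  have hsT : s < T.
    have : s^+2 < T^+2.
      rewrite hs /D /T.
      have -> : (2*A*rA2 - B)^+2 = B^+2 + 4*A*C + 4*A*(A*rA2^+2 - rA2*B - C) by ring.
      have : 0 < 4*A*(A*rA2^+2 - rA2*B - C) by apply: mulr_gt0 => //; apply: mulr_gt0.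
      lra.
    nra.
  have : 2*A*x < 2*A*rA2 by rewrite e; rewrite /T in hsT; lra.
  rewrite -!mulrA ltr_pM2l ?ltr0n // ltr_pM2l //.
- have hq : 4*A*(A*x^+2 - B*x - C) = 0.
    have -> : 4*A*(A*x^+2 - B*x - C) = (2*A*x - B)^+2 - D by rewrite /D; ring.
    have -> : 2*A*x - B = s by rewrite e; ring.
    by rewrite hs subrr.
  have hq' : A*x^+2 - B*x - C = 0.
    move: hq; move/eqP; rewrite mulf_eq0 mulf_eq0 (negbTE hA0) pnatr_eq0 /=.
    by move/eqP.
  have -> : rB1*(x+a)*(rA2-x) - rB2*x*(rA1+x+a) = -(A*x^+2 - B*x - C)
    by rewrite /A /B /C; ring.
  by rewrite hq' oppr0.
Qed.

Theorem mainTheorem1 (R : realType) (rA1 rB1 rA2 rB2 a : R) :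
  0 < rA1 -> 0 < rB1 -> 0 < rA2 -> 0 < rB2 -> 0 < a ->
  exists x y : R,
    [/\ 0 < x, x < rA2 & 0 < y] /\
    (* Step 1: x + a of A into P1 = (rA1, rB1), outputs b of B *)
    let b := swap_out rA1 rB1 (x + a) in
    (* Step 3: y of A into P2 in state (rA2 - x, rB2 + b), outputs b' of B *)
    let b' := swap_out (rA2 - x) (rB2 + b) y in
    (* Step 4: b' of B into P1 in state (rA1 + x + a, rB1 - b), outputs y + a' *)
    let out4 := swap_out (rB1 - b) (rA1 + x + a) b' in
    let a' := out4 - y in
    [/\ 0 < b, 0 < rB1 - b,
        (* Step 2: b of B into P2 = (rB2 in B, rA2 in A) outputs exactly x of A *)
        swap_out rB2 rA2 b = x,
        0 < b' /\ 0 < rA2 - x + y &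
        (* beneficiary receives a' = a (principal supplied a) *)
        a' = a].
Proof.
move=> h1 h2 h3 h4 h5.
have [x [hx0 hx1 hf]] := @root_ex R _ _ _ _ _ h1 h2 h3 h4 h5.
exists x, x; split => //.
have hK : 0 < rA1 + x + a by lra.
have hN : 0 < rA2 - x by lra.
have hK0 : rA1 + x + a != 0 by rewrite gt_eqF.
have hN0 : rA2 - x != 0 by rewrite gt_eqF.
have hb1 : swap_out rA1 rB1 (x + a) = rB2 * x / (rA2 - x).
  have e1 : swap_out rA1 rB1 (x + a) = rB1 * (x + a) / (rA1 + x + a).
    by rewrite /swap_out addrA; fld.
  rewrite e1; apply/eqP; rewrite -subr_eq0; apply/eqP.
  have -> : rB1 * (x + a) / (rA1 + x + a) - rB2 * x / (rA2 - x)
    = (rB1*(x+a)*(rA2-x) - rB2*x*(rA1+x+a)) / ((rA1+x+a)*(rA2-x)).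
 by fld.
  by rewrite hf mul0r.
have hL : rB1 - swap_out rA1 rB1 (x + a) = rA1 * rB1 / (rA1 + x + a).
  by rewrite /swap_out addrA; fld.
set b := swap_out rA1 rB1 (x + a) in hb1 hL *.
have hb : 0 < b by rewrite hb1; apply: divr_gt0 => //; apply: mulr_gt0.
have hrA20 : rA2 != 0 by rewrite gt_eqF.
have hM : rB2 + b = rB2 * rA2 / (rA2 - x) by rewrite hb1; fld.
have hb' : swap_out (rA2 - x) (rB2 + b) x = b.
  rewrite /swap_out hM hb1; fld.
  by rewrite subrK.
cbv zeta; rewrite hb'.
have hrB10 : rB1 != 0 by rewrite gt_eqF.
split => //.
- by rewrite hL; apply: divr_gt0 => //; apply: mulr_gt0.
- rewrite /swap_out hM; fld.
  by rewrite gt_eqF.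
- by split => //; lra.
- rewrite /swap_out subrK hL; fld.
Qed.
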